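(* Let $\alpha$, $a_n$ and the $\alpha$-sum-level sets $\mathcal L^{(\alpha)}_n$ be as in the context. Then for every $n\in\mathbb N$, \[\lambda(\mathcal L^{(\alpha)}_n)=\sum_{m=1}^n a_m\,\lambda(\mathcal L^{(\alpha)}_{n-m}).\]
   Context: Let $\mathcal U=[0,1]$, $\lambda$ Lebesgue measure. $\alpha=\{A_n:n\in\mathbb N\}$ is a countable partition of $\mathcal U$ (up to the point $0$) into left-open, right-closed intervals of positive length, ordered from right to left starting with $A_1$, accumulating only at $0$; $a_n:=\lambda(A_n)$, $t_n:=\sum_{k\ge n}a_k$, $A_n=(t_{n+1},t_n]$. $L_\alpha(x)=(t_n-x)/a_n$ on $A_n$, $L_\alpha(0)=0$. $C_\alpha(\ell_1,\dots,\ell_k):=\{x\in\mathcal U:L_\alpha^{i-1}(x)\in A_{\ell_i},\ i=1,\dots,k\}$. For $n\in\mathbb N$, $\mathcal L^{(\alpha)}_n:=\{x\in C_\alpha(\ell_1,\dots,\ell_k):\sum_{i=1}^k\ell_i=n\text{ for some }k\in\mathbb N\}$, and $\mathcal L^{(\alpha)}_0:=\mathcal U$. *)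

(* Defs.v *)
From HB Require Import structures.
From mathcomp Require Import all_boot all_order all_algebra.
From mathcomp Require Import all_classical all_reals all_analysis.
Set Implicit Arguments. Unset Strict Implicit. Unset Printing Implicit Defensive.
Import Order.TTheory GRing.Theory Num.Theory.
Local Open Scope classical_set_scope.
Local Open Scope ring_scope.

Section AlphaDefs.
Variable R : realType.
(* The partition alpha is encoded by the lengths a n = lambda(A_n), n >= 1
   (the value a 0 is irrelevant and never used). *)
Variable a : nat -> R.

Definition t_alpha (n : nat) : R := limn (fun N => \sum_(n <= k < N) a k).

Definition A_alpha (n : nat) : set R := `] t_alpha n.+1, t_alpha n]%classic.

Definition U01 : set R := `[0, 1]%classic.

(* L_alpha(x) = (t_n - x)/a_n for x in A_n (n >= 1), L_alpha(0) = 0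
   (and 0 outside of U, where it is never used). *)
Definition L_alpha (x : R) : R :=
  let n := xget 0%N [set n | (0 < n)%N /\ A_alpha n x] in
  if n is 0%N then 0 else (t_alpha n - x) / a n.

Fixpoint C_alpha (s : seq nat) : set R :=
  match s with
  | [::] => U01
  | l :: s' => [set x | A_alpha l x /\ C_alpha s' (L_alpha x)]
  end.

Definition Lev_alpha (n : nat) : set R :=
  if n is 0%N then U01
  else [set x | U01 x /\ exists s : seq nat,
          [/\ s != [::], all (fun l => (0 < l)%N) s, sumn s = n & C_alpha s x]].
End AlphaDefs.

(* Main.v *)
Require Import Defs.
From HB Require Import structures.
From mathcomp Require Import all_boot all_order all_algebra.
From mathcomp Require Import all_classical all_reals all_analysis.
From mathcomp Require Import ring lra zify.
Import Order.TTheory GRing.Theory Num.Theory.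
Import numFieldNormedType.Exports.
Local Open Scope classical_set_scope.
Local Open Scope ring_scope.

Set Implicit Arguments. Unset Strict Implicit.
Section Scale.
Variable R : realType.

Definition psi (t c : R) (x : R) : R := (t - x) / c.

Lemma psi_mfun (t c : R) : measurable_fun [set: R] (psi t c).
Proof.
apply: measurable_realfun.continuous_measurable_fun => x.
rewrite /psi; apply: cvgM; last exact: cvg_cst.
apply: cvgB; [exact: cvg_cst| exact: cvg_id].
Qed.

Section PF.
Variables (t c : R).
Let mf : measurable_fun [set: measurableTypeR R] (psi t c) := psi_mfun t c.
Definition pf : set (measurableTypeR R) -> \bar R :=
  fun A => lebesgue_measure (psi t c @^-1` A).

Let pf0 : pf set0 = 0%E.
Proof. by rewrite /pf preimage_set0 measure0. Qed.

Let pf_ge0 A : (0 <= pf A)%E.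
Proof. by rewrite /pf measure_ge0. Qed.

Let pf_sigma_additive : semi_sigma_additive pf.
Proof.
move=> F mF tF mUF; rewrite /pf preimage_bigcup.
apply: measure_semi_sigma_additive.
- by move=> n; rewrite -[X in measurable X]setTI; apply: mf => //; exact: mF.
- apply/trivIsetP => /= i j _ _ ij; rewrite -preimage_setI.
  by move/trivIsetP : tF => /(_ _ _ _ _ ij) ->//; rewrite preimage_set0.
- by rewrite -preimage_bigcup -[X in measurable X]setTI; apply: mf => //; exact: mUF.
Qed.

HB.instance Definition _ := isMeasure.Build _ _ _ pf pf0 pf_ge0 pf_sigma_additive.
End PF.

Lemma psi_measure (t c : R) (hc : 0 < c) (C : set R) : measurable C ->
  lebesgue_measure (psi t c @^-1` C) = (c%:E * lebesgue_measure C)%E.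
Proof.
move=> mC.
have hc' : (0 <= c^-1) by rewrite invr_ge0 ltW.
pose r : {nonneg R} := NngNum hc'.
transitivity ((r%:num)^-1%:E * mscale r (pf t c) C)%E.
  by rewrite /mscale muleA /= -EFinM invrK mulfV ?gt_eqF // mul1e.
congr (_ * _)%E; first by rewrite /= invrK.
apply/esym/lebesgue_measure_unique => //=.
move=> _ [[x y]] _ <-.
rewrite /mscale /pf /=.
transitivity ((c^-1)%:E * lebesgue_measure (`[(t - c * y)%R, (t - c * x)%R[%classic : set R))%E; last first.
  congr (_ * _)%E; rewrite /pf; congr (lebesgue_measure _).
  apply/seteqP; split => z /=; rewrite !in_itv /= /psi.
    move=> /andP[h1 h2]; apply/andP; split.
      by rewrite ltr_pdivlMr // mulrC; lra.
    by rewrite ler_pdivrMr // mulrC; lra.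
  move=> /andP[h1 h2]; move: h1 h2; rewrite ltr_pdivlMr // ler_pdivrMr // => h1 h2.
  apply/andP; split; rewrite mulrC; lra.
symmetry; rewrite !lebesgue_measure_itv /= !lte_fin ltrD2l ltrN2 ltr_pM2l //.
case: ifP => _; last by rewrite mule0.
by rewrite -!EFinB -EFinM; congr (_%:E); field; rewrite gt_eqF.
Qed.
End Scale.

Section Main.
Variable R : realType.
Variable a : nat -> R.
Hypothesis a_pos : forall n : nat, (0 < n)%N -> 0 < a n.
Hypothesis a_sum : (fun N => \sum_(1 <= k < N) a k) @ \oo --> (1 : R).

Let S m := \sum_(1 <= k < m) a k.

Lemma S_split m N : (1 <= m)%N -> (m <= N)%N -> S N = S m + \sum_(m <= k < N) a k.
Proof. by move=> h1 h2; rewrite /S (big_cat_nat h1 h2). Qed.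

Lemma tE m : (0 < m)%N -> t_alpha a m = 1 - S m.
Proof.
move=> m0; rewrite /t_alpha; apply: cvg_lim => //.
have : (fun N => S N - S m) @ \oo --> 1 - S m.
  by apply: cvgB => //; exact: cvg_cst.
apply: cvg_trans; apply: near_eq_cvg; near=> N.
have hN : (m <= N)%N by near: N; exists m.
by rewrite (@S_split m N) // addrC addKr.
Unshelve. all: by end_near.
Qed.

Lemma S_ge0 m : 0 <= S m.
Proof. by rewrite /S big_nat sumr_ge0 // => i /andP[h _]; apply/ltW/a_pos. Qed.

Lemma S_nd : nondecreasing_seq S.
Proof.
apply/nondecreasing_seqP => m; rewrite /S.
case: m => [|m]; first by rewrite big_geq // big_geq.
by rewrite [X in _ <= X]big_nat_recr //= lerDl; apply/ltW/a_pos.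
Qed.

Lemma S_le1 m : S m <= 1.
Proof.
have <- : limn S = 1 by apply: cvg_lim.
by apply: nondecreasing_cvgn_le; [exact: S_nd | apply/cvg_ex; exists 1].
Qed.

Lemma tS m : (0 < m)%N -> t_alpha a m.+1 = t_alpha a m - a m.
Proof.
move=> m0; rewrite !tE // /S big_nat_recr //=; lra.
Qed.

Lemma t_pos m : (0 < m)%N -> 0 < t_alpha a m.
Proof.
move=> m0; have h := S_le1 m.+1; rewrite /S big_nat_recr //= -/(S m) in h.
rewrite tE //; have := a_pos m0; lra.
Qed.

Lemma t_le1 m : (0 < m)%N -> t_alpha a m <= 1.
Proof. move=> m0; rewrite tE //; have := S_ge0 m; lra. Qed.

Lemma t_mono m k : (0 < m)%N -> (m < k)%N -> t_alpha a k <= t_alpha a m.+1.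
Proof.
move=> m0 mk; rewrite !tE //; last by apply: leq_ltn_trans mk.
rewrite (@S_split m.+1 k) //.
have : 0 <= \sum_(m.+1 <= k0 < k) a k0.
  rewrite big_nat sumr_ge0 // => i /andP[h _]; apply/ltW/a_pos.
  by apply: leq_ltn_trans h.
lra.
Qed.

Lemma A_iff m x : (0 < m)%N ->
  A_alpha a m x <-> (0 <= psi (t_alpha a m) (a m) x < 1).
Proof.
move=> m0; rewrite /A_alpha /= in_itv /= tS // /psi.
have am := a_pos m0.
rewrite ler_pdivlMr // ltr_pdivrMr // mul0r mul1r.
split => /andP[h1 h2]; apply/andP; split; lra.
Qed.

Lemma A_uniq m k x : (0 < m)%N -> (0 < k)%N -> A_alpha a m x -> A_alpha a k x -> m = k.
Proof.
move=> m0 k0; rewrite /A_alpha /= !in_itv /= => /andP[h1 h2] /andP[h3 h4].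
case: (ltngtP m k) => // mk.
  by have := lt_le_trans h1 (le_trans h4 (t_mono m0 mk)); rewrite ltxx.
by have := lt_le_trans h3 (le_trans h2 (t_mono k0 mk)); rewrite ltxx.
Qed.

Lemma L_A m x : (0 < m)%N -> A_alpha a m x -> L_alpha a x = psi (t_alpha a m) (a m) x.
Proof.
move=> m0 Ax; rewrite /L_alpha.
rewrite (@xget_unique _ 0%N [set n | (0 < n)%N /\ A_alpha a n x] m) //.
  by case: m m0 Ax.
by move=> k [k0 Akx]; exact: (A_uniq k0 m0 Akx Ax).
Qed.

Lemma A_U01 m x : (0 < m)%N -> A_alpha a m x -> @U01 R x.
Proof.
move=> m0; rewrite /A_alpha /U01 /= !in_itv /= => /andP[h1 h2].
have := t_pos (ltn0Sn m); have := t_le1 m0; lra.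
Qed.

Definition piece n m : set R :=
  psi (t_alpha a m) (a m) @^-1` (Lev_alpha a (n - m) `&` `[0, 1[%classic).

Lemma Lev_sub k : Lev_alpha a k `<=` @U01 R.
Proof. by case: k => [|k] x //= [] . Qed.

Lemma Lev_decomp n : (0 < n)%N ->
  Lev_alpha a n = \big[setU/set0]_(i < n) piece n i.+1.
Proof.
case: n => [//|n] _; rewrite -(bigcup_mkord n.+1 (fun i => piece n.+1 i.+1)); apply/seteqP; split => x.
  move=> /= [Ux [[|l s'] [sne spos ssum Cs]]] //.
  move: spos Cs => /= /andP[l0 spos] [Alx Cs'].
  have ln : (l.-1 < n.+1)%N by move: ssum => /=; lia.
  exists l.-1 => //; rewrite prednK // /piece /=.
  have /(A_iff x l0) hpsi := Alx.
  have y01 : psi (t_alpha a l) (a l) x \in `[0, 1[ by rewrite in_itv.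
  rewrite -(L_A l0 Alx) in y01 *; split; last by [].
  have -> : (n.+1 - l = sumn s')%N by move: ssum => /=; lia.
  case: s' sne spos ssum Cs' => [|l2 s2] _ spos ssum Cs'.
    by move: y01; rewrite /= in_itv /U01 /= in_itv /= => /andP[-> /ltW ->].
  have l20 : (0 < l2)%N by move: spos => /= /andP[].
  have [k hk] : exists k, sumn (l2 :: s2) = k.+1.
    by exists (sumn (l2 :: s2)).-1; rewrite prednK //= ltn_addr.
  rewrite hk /=; split.
    by move: y01; rewrite /= in_itv /U01 /= in_itv /= => /andP[-> /ltW ->].
  by exists (l2 :: s2); split.
move=> [i /= hi] [Ly y01].
have i0 : (0 < i.+1)%N by [].
have Aix : A_alpha a i.+1 x by apply/(A_iff x i0); move: y01; rewrite /= in_itv.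
rewrite -(L_A i0 Aix) in Ly y01.
split; first exact: (A_U01 i0 Aix).
case hk : (n.+1 - i.+1)%N => [|k].
  exists [:: i.+1]; split => //=; first by lia.
  by split => //; move: y01; rewrite /U01 /= !in_itv /= => /andP[-> /ltW ->].
move: Ly; rewrite hk /= => [[_ [s' [sne spos ssum Cs]]]].
exists (i.+1 :: s'); split => //=; first by lia.
Qed.

Lemma Lev_meas k : measurable (Lev_alpha a k).
Proof.
elim/ltn_ind: k => k IH.
case: k IH => [|k] IH; first exact: measurable_itv.
rewrite Lev_decomp //; apply: bigsetU_measurable => i _.
rewrite /piece -[X in measurable X]setTI; apply: psi_mfun => //.
apply: measurableI; last exact: measurable_itv.
apply: IH; lia.
Qed.

Lemma piece_measure n m : (0 < m)%N ->
  lebesgue_measure (piece n m) = ((a m)%:E * lebesgue_measure (Lev_alpha a (n - m)))%E.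
Proof.
move=> m0; rewrite /piece psi_measure //; last first.
  by apply: measurableI; [exact: Lev_meas | exact: measurable_itv].
  exact: a_pos.
congr (_ * _)%E.
set B := Lev_alpha a (n - m).
have mB : measurable B by exact: Lev_meas.
have mI : measurable (`[0, 1[%classic : set R) by exact: measurable_itv.
apply/le_anti/andP; split.
  by apply: le_measure; rewrite ?inE //; (try exact: measurableI); exact: subIsetl.
have mI1 : measurable (B `&` `[0, 1[%classic `|` [set (1:R)]).
  by apply: measurableU; [exact: measurableI | exact: measurable_set1].
have h1 : (lebesgue_measure B <= lebesgue_measure (B `&` `[0%R, 1%R[%classic `|` [set (1%R:R)]))%E.
  apply: le_measure; rewrite ?inE //.
  move=> x Bx; have := Lev_sub Bx; rewrite /U01 /= in_itv /= => /andP[x0 x1].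
  have [->|x1'] := eqVneq x 1; first by right.
  by left; split => //=; rewrite in_itv /= x0 /= lt_neqAle x1' x1.
have h2 := measureU2 lebesgue_measure (measurableI _ _ mB mI) (measurable_set1 (1:R)).
have := le_trans h1 h2.
have h3 := lebesgue_measure_set1 (1%R : R). move: h3 => /= h3. by rewrite h3 adde0.
Qed.

Lemma main_eq n : (0 < n)%N ->
  (@lebesgue_measure R) (Lev_alpha a n) =
  (\sum_(1 <= m < n.+1) ((a m)%:E * (@lebesgue_measure R) (Lev_alpha a (n - m))))%E.
Proof.
move=> n0; rewrite Lev_decomp //.
have H := @measure_bigsetU _ _ _ (@lebesgue_measure R) (fun i => piece n i.+1).
rewrite H; last first.
- apply/trivIsetP => i j _ _ ij; apply/seteqP; split => // x [].
  rewrite /piece /= => [[_ hi] [_ hj]].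
  have Ai : A_alpha a i.+1 x by apply/(A_iff x (ltn0Sn i)); move: hi; rewrite /= in_itv.
  have Aj : A_alpha a j.+1 x by apply/(A_iff x (ltn0Sn j)); move: hj; rewrite /= in_itv.
  by have := A_uniq (ltn0Sn i) (ltn0Sn j) Ai Aj => -[] /eqP; rewrite (negbTE ij).
- move=> i; rewrite /piece -[X in measurable X]setTI; apply: psi_mfun => //.
  by apply: measurableI; [exact: Lev_meas | exact: measurable_itv].
rewrite big_add1 /= big_mkord.
by apply: eq_bigr => i _; rewrite piece_measure.
Qed.
End Main.

Unset Implicit Arguments. Set Strict Implicit.

Theorem lemma3p1 (R : realType) (a : nat -> R)
  (a_pos : forall n : nat, (0 < n)%N -> 0 < a n)
  (a_sum : (fun N => \sum_(1 <= k < N) a k) @ \oo --> (1 : R))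
  (n : nat) (n_pos : (0 < n)%N) :
  (@lebesgue_measure R) (Lev_alpha a n) =
  (\sum_(1 <= m < n.+1) ((a m)%:E * (@lebesgue_measure R) (Lev_alpha a (n - m))))%E.
Proof. exact: main_eq. Qed.
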